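(* Let $\Bbbk$ be a field, $R=\Bbbk[x_1,\dots,x_m]$ with the standard $\mathbb Z^m$-grading, $M$ a finitely generated torsion-free $\mathbb Z^m$-graded $R$-module, and $\mathcal F_\bullet$ a minimal $\mathbb Z^m$-graded free resolution of $M$ with differentials $f_n$ (and $f_0\colon F_0\to M$ the augmentation). Let $B$ be a homogeneous basis of $\mathcal F_\bullet$ with minimal support. If $n\ge1$ and $y\in F_n$ is a homogeneous element with $\operatorname{supp}f_n(y)=\operatorname{supp}f_n(b)$ for some $b\in B_n$, then there is a nonzero homogeneous $a\in R$ with $a f_n(b)=f_n(y)$. In particular, any two distinct elements of $B_n$ ($n\ge1$) have non-comparable (with respect to inclusion) boundary supports.
   Context: For a complex of free modules $\mathcal F_\bullet$ with differentials $f_n$, $f_0\colon F_0\to H_0(\mathcal F_\bullet)$ the canonical projection, and bases $B_n$ of $F_n$, $B=\coprod B_n$: the support of $y=\sum_{c\in B_n}a_cc$ is $\{c\in B_n:a_c\ne0\}$; $y$ is a cycle with minimal support if $y\in\operatorname{Ker}f_n$ and $\operatorname{supp}y$ does not properly contain the support of any nonzero element of $\operatorname{Ker}f_n$; the boundary support of $y\in F_n$ ($n\ge1$) is $\operatorname{supp}f_n(y)$; $B$ is a basis with minimal support if $f_n(b)$ is a cycle with minimal support for all $n\ge1$, $b\in B_n$. A $\mathbb Z^m$-graded free resolution is minimal if its differentials are homogeneous of degree $0$ and $f_n(F_n)\subseteq(x_1,\dots,x_m)F_{n-1}$ for $n\ge1$. *)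

(* Defs.v *)
From HB Require Import structures.
From mathcomp Require Import all_boot all_order all_algebra.
From mathcomp Require Export mpoly.
Set Implicit Arguments. Unset Strict Implicit. Unset Printing Implicit Defensive.
Import GRing.Theory.
Local Open Scope ring_scope.

(* R = {mpoly K[m]} (standard Z^m-grading: the monomial with
   exponent vector e has degree e).  The free module F_n has a finite homogeneous
   basis B_n indexed by 'I_(r n); elements of F_n are row vectors 'rV_(r n)
   (coordinates in B_n) and the degree of the basis element i of F_n is
   deg n i : Z^m (a function 'I_m -> int).  The differential f_{k+1} : F_{k+1} -> F_k
   is right multiplication by D k : 'M_(r k.+1, r k), so f_{k+1}(b) = row b (D k). *)

Section Defs.
Variables (K : fieldType) (m : nat).
Local Notation R := {mpoly K[m]}.

Definition homog_of (p : R) (e : 'I_m -> int) : Prop :=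
  forall mon : 'X_{1..m}, mon \in msupp p -> forall j : 'I_m, (mon j)%:Z = e j.

Definition homog_poly (p : R) : Prop := exists e, homog_of p e.

Definition homog_elt (n : nat) (dg : 'I_n -> 'I_m -> int) (y : 'rV[R]_n) : Prop :=
  exists e : 'I_m -> int, forall i, homog_of (y 0 i) (fun j => e j - dg i j).

Definition supp (n : nat) (y : 'rV[R]_n) : {set 'I_n} := [set i | y 0 i != 0].

Variables (r : nat -> nat) (D : forall k, 'M[R]_(r k.+1, r k)).

(* Ker f_k, where f_0 : F_0 -> M = H_0 = coker f_1 is the canonical projection *)
Definition ker_f (k : nat) : 'rV[R]_(r k) -> Prop :=
  match k return 'rV[R]_(r k) -> Prop with
  | 0 => fun v => exists z : 'rV[R]_(r 1), v = z *m D 0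
  | k'.+1 => fun v => v *m D k' = 0
  end.

Definition is_complex : Prop := forall k, D k.+1 *m D k = 0.

Definition exact_pos : Prop :=
  forall k (v : 'rV[R]_(r k.+1)), @ker_f k.+1 v -> exists z, v = z *m D k.+1.

Definition graded_diff (deg : forall k, 'I_(r k) -> 'I_m -> int) : Prop :=
  forall k i j, homog_of (D k i j) (fun l => deg k.+1 i l - deg k j l).

(* minimality: f_n(F_n) inside (x_1..x_m) F_{n-1}, i.e. no constant terms *)
Definition minimal_diff : Prop := forall k i j, (D k i j)@_0%MM = 0.

(* M = coker f_1 = F_0 / im f_1 is torsion-free *)
Definition torsion_free_coker : Prop :=
  forall (a : R) (v : 'rV[R]_(r 0)), a != 0 ->
    (exists z, a *: v = z *m D 0) -> exists z, v = z *m D 0.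

Definition min_support_cycle (k : nat) (y : 'rV[R]_(r k)) : Prop :=
  @ker_f k y /\ forall w, @ker_f k w -> w != 0 -> ~ (supp w \proper supp y).

Definition basis_min_support : Prop :=
  forall k (b : 'I_(r k.+1)), @min_support_cycle k (row b (D k)).

End Defs.

(* Main.v *)
Require Import Defs.
From HB Require Import structures.
From mathcomp Require Import all_boot all_order all_algebra.
From mathcomp Require Import mpoly.
From mathcomp Require Import zify.
Import GRing.Theory.
Local Open Scope ring_scope.
Set Implicit Arguments. Unset Strict Implicit.

Section Poly.
Variables (K : fieldType) (m : nat).
Local Notation P := {mpoly K[m]}.

Definition tmon1 (p : P) : 'X_{1..m} := head 0%MM (msupp p).

Lemma term_dec (p : P) e : homog_of p e -> p = p@_(tmon1 p) *: 'X_[tmon1 p].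
Proof.
move=> hp; rewrite /tmon1.
case E: (msupp p) => [|mo rest] /=.
  by rewrite (msuppnil0 E) mcoeff0 scale0r.
have Hall : forall x, x \in msupp p -> x = mo.
  move=> x hx; apply/mnmP => j; have := hp x hx j; have := hp mo.
  rewrite E mem_head => /(_ isT j) <- [] //.
case: rest E => [|x rest] E.
  by rewrite {1}[p]mpolyE E big_seq1.
have := msupp_uniq p; rewrite E /= => /andP [] /negP; case.
by rewrite (Hall x) ?E ?inE ?eqxx ?orbT // mem_head.
Qed.

Lemma tmon1_nz (p : P) : p != 0 -> p@_(tmon1 p) != 0.
Proof.
move=> nz; rewrite -mcoeff_msupp /tmon1.
case E: (msupp p) => [|mo rest] /=; last by rewrite mem_head.
by move: nz; rewrite -msupp_eq0 E.
Qed.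

Lemma homog_ext (p : P) e f : (forall j, e j = f j) -> homog_of p e -> homog_of p f.
Proof. by move=> ef hp mo hmo j; rewrite -ef hp. Qed.

Lemma homog0 e : homog_of (0 : P) e.
Proof. by move=> mo; rewrite msupp0. Qed.

Lemma homogD (p q : P) e : homog_of p e -> homog_of q e -> homog_of (p + q) e.
Proof.
move=> hp hq mo /msuppD_le; rewrite mem_cat => /orP [] h j; [exact: hp|exact: hq].
Qed.

Lemma homogM (p q : P) e f : homog_of p e -> homog_of q f ->
  homog_of (p * q) (fun j => e j + f j).
Proof.
move=> hp hq mo /msuppM_le /allpairsP [[m1 m2] /= [h1 h2 ->]] j.
by rewrite mnmDE PoszD (hp _ h1) (hq _ h2).
Qed.

Lemma homog_sum I (s : seq I) (F : I -> P) e :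
  (forall i, homog_of (F i) e) -> homog_of (\sum_(i <- s) F i) e.
Proof.
move=> hF; apply: (big_ind (fun x => homog_of x e)) => //.
- exact: homog0.
- by move=> x y; apply: homogD.
Qed.

Lemma homogX (c : K) mo : homog_of (c *: 'X_[mo] : P) (fun j => (mo j)%:Z).
Proof. by move=> x /msuppZ_le; rewrite msuppX mem_seq1 => /eqP ->. Qed.

Lemma term_inj (c d : K) a b : c != 0 -> c *: 'X_[a] = d *: 'X_[b] :> P -> a = b.
Proof.
move=> nz /(congr1 (mcoeff a)); rewrite !mcoeffZ !mcoeffX eqxx mulr1.
by case: eqP => // _; rewrite mulr0 => E; move: nz; rewrite E eqxx.
Qed.

Lemma const_coeffM (p q : P) : (p * q)@_0%MM = p@_0%MM * q@_0%MM.
Proof. exact: (rmorphM (mcoeff 0%MM : P -> K)). Qed.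

End Poly.

Unset Implicit Arguments.
Section Main.
Variables (K : fieldType) (m : nat) (r : nat -> nat)
  (D : forall k, 'M[{mpoly K[m]}]_(r k.+1, r k))
  (deg : forall k, 'I_(r k) -> 'I_m -> int).
Hypotheses (cpx : is_complex D) (ex : exact_pos D) (gr : graded_diff D deg)
  (mind : minimal_diff D) (tfc : torsion_free_coker D) (bms : basis_min_support D).
Local Notation P := {mpoly K[m]}.

Lemma L0 k (v : 'rV[P]_(r k.+1)) : v *m D k = 0 -> forall b, (v 0 b)@_0%MM = 0.
Proof.
move=> hv b; have [w ->] := @ex k v hv.
rewrite mxE (rmorph_sum (mcoeff 0%MM : P -> K)) big1 // => i _.
rewrite /= const_coeffM; have h := mind k.+1 i b; by rewrite h mulr0.
Qed.

Lemma Xnz (l : 'I_m) : ('X_l : P) != 0.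
Proof. by rewrite -msupp_eq0 msuppX. Qed.

Lemma Div k b l (u : 'rV[P]_(r k)) : row b (D k) = 'X_l *: u -> False.
Proof.
move=> E.
have [z Hz] : exists z, u = z *m D k.
  case: k b u E => [|k] b u E.
    apply: (@tfc 'X_l u (Xnz l)); exists (delta_mx 0 b); by rewrite -E -rowE.
  apply: (@ex k u) => /=.
  have : ('X_l *: u) *m D k = 0 by rewrite -E -row_mul cpx row0.
  by rewrite -scalemxAl => /eqP; rewrite scalemx_eq0 (negbTE (Xnz l)) /= => /eqP.
pose v := delta_mx 0 b - 'X_l *: z.
have hv : v *m D k = 0.
  by rewrite mulmxBl -rowE -scalemxAl -Hz E subrr.
have := @L0 k v hv b; rewrite /v !mxE !eqxx /= mcoeffB const_coeffM mcoeff1 eqxx.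
rewrite mcoeffX.
have -> : (U_(l) == 0)%MM = false by apply: mnm1_eq0.
by rewrite mul0r subr0 => /eqP; rewrite oner_eq0.
Qed.


Lemma ker_row k b : @ker_f _ _ _ D k (row b (D k)).
Proof. by have [] := @bms k b. Qed.

Lemma ker_h k (y : 'rV[P]_(r k.+1)) : @ker_f _ _ _ D k (y *m D k).
Proof. by case: k y => [|k] y /=; [exists y | rewrite -mulmxA cpx mulmx0]. Qed.

Lemma ker_lin k (s t : P) (v w : 'rV[P]_(r k)) :
  @ker_f _ _ _ D k v -> @ker_f _ _ _ D k w -> @ker_f _ _ _ D k (s *: v - t *: w).
Proof.
case: k v w => [|k] v w /=.
  by move=> [z1 ->] [z2 ->]; exists (s *: z1 - t *: z2); rewrite mulmxBl !scalemxAl.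
by move=> hv hw; rewrite mulmxBl -!scalemxAl hv hw !scaler0 subr0.
Qed.

Lemma part1 k (y : 'rV[P]_(r k.+1)) b : homog_elt (deg k.+1) y ->
  supp (y *m D k) = supp (row b (D k)) ->
  exists a : P, a != 0 /\ homog_poly a /\ a *: row b (D k) = y *m D k.
Proof.
move=> [e He] Hs.
have Hh j : homog_of ((y *m D k) 0 j) (fun l => e l - deg k j l).
  rewrite mxE; apply: homog_sum => i.
  apply: homog_ext (homogM (He i) (gr k i j)) => l /=.
  by rewrite addrA subrK.
have Hg j : homog_of (row b (D k) 0 j) (fun l => deg k.+1 b l - deg k j l).
  by rewrite mxE; apply: gr.
have kg := @ker_row k b; have kh := @ker_h k y.
have [_ mins] := @bms k b.
have DivG : forall l (u : 'rV[P]_(r k)), row b (D k) = 'X_l *: u -> False.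
  by move=> l u; apply: Div.
move: (row b (D k)) (y *m D k) Hs Hh Hg kg kh mins DivG => g h Hs Hh Hg kg kh mins DivG.
have supp_eq j : (h 0 j != 0) = (g 0 j != 0).
  by move/setP: Hs => /(_ j); rewrite /supp !inE.
case: (boolP (g == 0)) => [/eqP g0 | gnz].
  exists 1; split; first exact: oner_neq0.
  split.
    exists (fun _ => 0) => mo; rewrite msupp1 mem_seq1 => /eqP -> j.
    by rewrite mnm0E.
  rewrite g0 scaler0; apply/rowP => j; apply/esym/eqP; rewrite mxE.
  by apply/negbFE; rewrite supp_eq g0 mxE eqxx.
have [c gc] : exists c, g 0 c != 0.
  apply/existsP; apply: contraNT gnz => /existsPn H.
  by apply/eqP/rowP => j; rewrite mxE; apply/eqP/negbNE/H.
have tnz : h 0 c != 0 by rewrite supp_eq.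
have Hw : (g 0 c) *: h = (h 0 c) *: g.
  apply/eqP; rewrite -subr_eq0; apply/eqP.
  have kw := @ker_lin k (g 0 c) (h 0 c) _ _ kh kg.
  apply/eqP; apply/negPn/negP => wnz; apply: (mins _ kw wnz).
  rewrite properE; apply/andP; split.
    apply/subsetP => j; rewrite /supp !inE !mxE => hj.
    apply/negP => /eqP gj; move: hj.
    have -> : h 0 j = 0 by apply/eqP; rewrite -[_ == 0]negbK supp_eq gj eqxx.
    by rewrite gj !mulr0 subrr eqxx.
  apply/subsetPn; exists c; first by rewrite /supp inE.
  by rewrite /supp inE !mxE mulrC subrr eqxx.
have Hcoef j : g 0 c * h 0 j = h 0 c * g 0 j.
  by move/matrixP: Hw => /(_ 0 j); rewrite !mxE.
move: (g 0 c) (h 0 c) (Hg c) (Hh c) gc tnz Hcoef => s t Hs' Ht' snz tnz' Hcoef.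
have Es := term_dec Hs'; have Et := term_dec Ht'.
have c1nz := tmon1_nz snz; have c2nz := tmon1_nz tnz'.
move: (tmon1 s) (tmon1 t) (mcoeff (tmon1 s) s) (mcoeff (tmon1 t) t) Es Et c1nz c2nz.
move=> al be c1 c2 Es Et c1nz c2nz.
have TT (a1 a2 : K) (m1 m2 : 'X_{1..m}) :
    (a1 *: 'X_[m1]) * (a2 *: 'X_[m2]) = (a1 * a2) *: 'X_[m1 + m2] :> P.
  by rewrite -scalerAl -scalerAr scalerA -mpolyXD.
have le : (al <= be)%MM.
  apply/mnm_lepP => l; rewrite leqNgt; apply/negP => lt.
  apply: (DivG l (\row_j ((g 0 j)@_(tmon1 (g 0 j)) *: 'X_[tmon1 (g 0 j) - U_(l)]))).
  have key j : g 0 j = 'X_l * ((g 0 j)@_(tmon1 (g 0 j)) *: 'X_[tmon1 (g 0 j) - U_(l)]).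
    case g0: (g 0 j == 0); first by rewrite (eqP g0) mcoeff0 scale0r mulr0.
    have hnz : h 0 j != 0 by rewrite supp_eq g0.
    have Eg := term_dec (Hg j); have Eh := term_dec (Hh j).
    have dnz := tmon1_nz (negbT g0); have c3nz := tmon1_nz hnz.
    move: (tmon1 (g 0 j)) ((g 0 j)@_(tmon1 (g 0 j))) (tmon1 (h 0 j)) ((h 0 j)@_(tmon1 (h 0 j))) Eg Eh dnz c3nz.
    move=> de d et c3 Eg Eh dnz c3nz.
    have := Hcoef j; rewrite Es Et Eg Eh !TT => /term_inj.
    rewrite mulf_neq0 // => /(_ isT) /mnmP /(_ l); rewrite !mnmDE => El.
    have dl : (0 < de l)%N by lia.
    rewrite -scalerAr -mpolyXD; congr (_ *: 'X_[_]).
    apply/mnmP => i; rewrite mnmDE mnmBE mnm1E.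
    by case: eqP => [<-|_] /=; [rewrite addnC subnK | rewrite add0n subn0].
  by apply/rowP => j; rewrite !mxE -key.
pose a : P := (c2 / c1) *: 'X_[be - al].
have aS : a * s = t.
  rewrite Es Et TT divfK //; congr (_ *: 'X_[_]).
  apply/mnmP => i; rewrite mnmDE mnmBE subnK //; exact: (mnm_lepP le).
exists a; split.
  by apply/eqP => a0; move: tnz'; rewrite -aS a0 mul0r eqxx.
split; first by exists (fun j => ((be - al)%MM j)%:Z); apply: homogX.
apply/rowP => j; rewrite mxE; apply: (mulfI snz).
by rewrite Hcoef -aS mulrA (mulrC s a).
Qed.


Lemma part2 k (b b' : 'I_(r k.+1)) : b != b' ->
  ~ (supp (row b (D k)) \subset supp (row b' (D k))).
Proof.
move=> neq sub.
have gnz : row b (D k) != 0.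
  apply/eqP => g0.
  have hv : (delta_mx 0 b : 'rV[P]_(r k.+1)) *m D k = 0 by rewrite -rowE g0.
  have := @L0 k _ hv b; rewrite mxE !eqxx /= mcoeff1 eqxx => /eqP.
  by rewrite oner_eq0.
have [_ mins] := @bms k b'.
have eqs : supp (row b (D k)) = supp (row b' (D k)).
  apply/eqP; rewrite eqEproper sub /=; apply/negP => pr.
  exact: (mins _ (@ker_row k b) gnz pr).
have hy : homog_elt (deg k.+1) (delta_mx 0 b' : 'rV[P]_(r k.+1)).
  exists (deg k.+1 b') => i; rewrite mxE /=.
  case: (eqVneq i b') => [->|ne] /=; last exact: homog0.
  move=> mo; rewrite msupp1 mem_seq1 => /eqP -> j.
  by rewrite mnm0E subrr.
have hs : supp ((delta_mx 0 b' : 'rV[P]_(r k.+1)) *m D k) = supp (row b (D k)).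
  by rewrite -rowE eqs.
have [a [_ [_ Ea]]] := @part1 k (delta_mx 0 b') b hy hs.
pose v : 'rV[P]_(r k.+1) := delta_mx 0 b' - a *: delta_mx 0 b.
have hv : v *m D k = 0.
  by rewrite /v mulmxBl -scalemxAl -Ea -rowE subrr.
have := @L0 k v hv b'; rewrite /v !mxE !eqxx /= eq_sym (negbTE neq) /=.
by rewrite mulr0 subr0 mcoeff1 eqxx => /eqP; rewrite oner_eq0.
Qed.

End Main.

Theorem mainTheorem5 (K : fieldType) (m : nat) (r : nat -> nat)
  (D : forall k, 'M[{mpoly K[m]}]_(r k.+1, r k))
  (deg : forall k, 'I_(r k) -> 'I_m -> int) :
  is_complex D -> exact_pos D -> graded_diff D deg -> minimal_diff D ->
  torsion_free_coker D -> basis_min_support D ->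
  (forall (k : nat) (y : 'rV[{mpoly K[m]}]_(r k.+1)) (b : 'I_(r k.+1)),
      homog_elt (deg k.+1) y ->
      supp (y *m D k) = supp (row b (D k)) ->
      exists a : {mpoly K[m]},
        a != 0 /\ homog_poly a /\ a *: row b (D k) = y *m D k)
  /\
  (forall (k : nat) (b b' : 'I_(r k.+1)), b != b' ->
      ~ (supp (row b (D k)) \subset supp (row b' (D k)))).
Proof.
move=> cpx ex gr mind tfc bms; split.
  by move=> k y b; apply: part1.
by move=> k b b'; apply: part2.
Qed.
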